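(* Let $p$ be a Fermat prime, i.e. a prime of the form $p = 2^{m}+1$ with $m$ a positive integer. Then for every positive integer $k$, \[ \sum_{i=1}^{K(p^k)} \phi^{i}(p^k) \;=\; \phi(p^k) + \phi(\phi(p^k)) + \phi(\phi(\phi(p^k))) + \cdots + \phi(2) \;=\; \frac{2}{p+1}\left[p^k(p-1) + 2\left(\frac{p-1}{2}\right)^k\right] - 1 . \]
   Context: $\phi$ denotes Euler's totient function: $\phi(n)$ is the number of integers $x$ with $1\le x\le n$ and $\gcd(x,n)=1$ (so $\phi(1)=\phi(2)=1$). For $i\ge 1$, $\phi^{i}$ denotes the $i$-fold iterate $\phi\circ\cdots\circ\phi$. For an integer $n\ge 2$, $K(n)$ denotes the least positive integer $j$ with $\phi^{j}(n)=1$; the sum $\phi(n)+\phi(\phi(n))+\cdots+\phi(2)$ means $\sum_{i=1}^{K(n)}\phi^i(n)$, i.e. the iteration is summed up to and including the first iterate equal to $1$ (which for $n\ge 3$ is the term $\phi(2)$). *)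

(* Defs.v *)
From mathcomp Require Import all_boot all_order all_algebra.
Set Implicit Arguments. Unset Strict Implicit. Unset Printing Implicit Defensive.

(* K(n) = least positive j with phi^j(n) = 1.  For n >= 2, phi strictly
   decreases until it reaches 1, so such j exists and j <= n; we search
   j in 1..n. *)
Definition K (n : nat) : nat :=
  (find (fun j => iter j totient n == 1) (iota 1 n)).+1.

Definition totient_iter_sum (n : nat) : nat :=
  \sum_(1 <= i < (K n).+1) iter i totient n.

(* Main.v *)
Require Import Defs.
From mathcomp Require Import all_boot all_order all_algebra.
From mathcomp Require Import zify ring.
Import GRing.Theory Num.Theory.

Definition G (L x : nat) : nat := \sum_(1 <= i < L.+1) iter i totient x.

Lemma G_S L x : G L.+1 x = totient x + G L (totient x).
Proof.
rewrite /G big_nat_recl //; congr (_ + _).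
by apply: eq_bigr => i _; rewrite iterSr.
Qed.

Lemma G_0 x : G 0 x = 0.
Proof. by rewrite /G big_geq. Qed.

Lemma tot2 b : totient (2 ^ b.+1) = 2 ^ b.
Proof. by rewrite totient_pfactor //= mul1n. Qed.

Lemma twos_iter b j : j <= b -> iter j totient (2 ^ b) = 2 ^ (b - j).
Proof.
elim: j => [|j IH] Hj; first by rewrite subn0.
rewrite iterS IH; last by lia.
have -> : b - j = (b - j.+1).+1 by lia.
by rewrite tot2.
Qed.

Lemma twos_G b : G b (2 ^ b) + 1 = 2 ^ b.
Proof.
elim: b => [|b IH]; first by rewrite G_0.
rewrite G_S tot2 expnS -addnA IH; lia.
Qed.

Lemma pcop n a c : coprime (((2 ^ n.+1).+1) ^ a) (2 ^ c).
Proof. by rewrite coprimeXl // coprimeXr // coprimen2 /= oddX orbF. Qed.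

Lemma gt1_2 k : 0 < k -> 1 < 2 ^ k.
Proof. by move=> Hk; rewrite -[1]/(2^0) ltn_exp2l. Qed.

Lemma tot_mixed n a c : prime ((2 ^ n.+1).+1) ->
  totient (((2 ^ n.+1).+1) ^ a.+1 * 2 ^ c.+1) = ((2 ^ n.+1).+1) ^ a * 2 ^ (c + n).+1.
Proof.
move=> pr; rewrite totient_coprime ?pcop // tot2 totient_pfactor //=.
have -> : (c + n).+1 = n.+1 + c by lia.
rewrite expnD. ring.
Qed.

Lemma mixed n a : prime ((2 ^ n.+1).+1) -> forall c,
  let r := 2 ^ n in let p := (2 ^ n.+1).+1 in
  let x := p ^ a * 2 ^ c.+1 in
  (r + 1) * (G (a * n.+1 + c.+1) x + 1) = 2 ^ c.+1 * (r * p ^ a + r ^ a)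
  /\ (forall j, j < a * n.+1 + c.+1 -> 1 < iter j totient x)
  /\ iter (a * n.+1 + c.+1) totient x = 1.
Proof.
move=> pr; elim: a => [|a IH] c r p x.
- rewrite /x expn0 mul1n mul0n add0n; rewrite twos_G; split; first by rewrite mulnC expn0 muln1.
  split; last by rewrite twos_iter // subnn.
  by move=> j Hj; rewrite twos_iter ?gt1_2; lia.
- have E : a.+1 * n.+1 + c.+1 = (a * n.+1 + (c + n).+1).+1 by lia.
  have [H1 [H2 H3]] := IH (c + n).
  rewrite E; split; [|split].
  + rewrite G_S /x tot_mixed //.
    move: H1; rewrite /r /p.
    set g := G _ _.
    rewrite !expnS expnD.
    set P := (_ ^ a); set R := (2 ^ n) ^ a; set C := 2 ^ c; set r2 := 2 ^ n.
    move=> H1.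
    have -> : (r2 + 1) * (P * (2 * (C * r2)) + g + 1) = (r2 + 1) * (P * (2 * (C * r2))) + (r2 + 1) * (g + 1) by ring.
    rewrite H1; ring.
  + case=> [|j] Hj.
      rewrite /= /x expnS expnS mulnA; have := @gt1_2 c.+1 (ltn0Sn c).
      have : 0 < p ^ a by rewrite expn_gt0.
      rewrite expnS; nia.
    rewrite iterSr /x tot_mixed //; apply: H2; lia.
  + by rewrite iterSr /x tot_mixed //.
Qed.

Lemma main_nat n k' : prime ((2 ^ n.+1).+1) ->
  let r := 2 ^ n in let p := (2 ^ n.+1).+1 in
  (r + 1) * (totient_iter_sum (p ^ k'.+1) + 1) = 2 * (r * p ^ k'.+1 + r ^ k'.+1).
Proof.
move=> pr r p.
set L := k' * n.+1 + n.+1.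
have [H1 [H2 H3]] := mixed n k' pr n.
have Tx : totient (p ^ k'.+1) = p ^ k' * 2 ^ n.+1.
  by rewrite totient_pfactor //= mulnC.
have HL : L < p ^ k'.+1.
  apply: (@leq_trans (2 ^ L)); first exact: ltn_expl.
  have -> : L = n.+1 * k'.+1 by rewrite /L; lia.
  by rewrite expnM leq_exp2r // /p.
have HK : K (p ^ k'.+1) = L.+1.
  rewrite /K; congr S.
  have E : iota 1 (p ^ k'.+1) = iota 1 L ++ (L.+1 :: iota L.+2 (p ^ k'.+1 - L).-1).
    rewrite {1}(_ : p ^ k'.+1 = L + (p ^ k'.+1 - L).-1.+1); last by lia.
    by rewrite iotaD /= add1n.
  rewrite E find_cat.
  have -> : has (fun j => iter j totient (p ^ k'.+1) == 1) (iota 1 L) = false.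
    apply/negbTE/hasPn => j; rewrite mem_iota => /andP [Hj1 Hj2].
    case: j Hj1 Hj2 => [|j] // _ Hj2.
    rewrite iterSr Tx.
    by rewrite neq_ltn H2 ?orbT //; rewrite /L; lia.
  by rewrite size_iota /= -iterS iterSr Tx H3 eqxx addn0.
rewrite /totient_iter_sum HK -/(G L.+1 _) G_S Tx.
move: H1; rewrite -/L -/r -/p.
set g := G _ _.
rewrite !expnS.
set P := p ^ k'; set R := r ^ k'; set C := 2 ^ n.
move=> H1.
have -> : (r + 1) * (P * (2 * C) + g + 1) = (r + 1) * (P * (2 * C)) + (r + 1) * (g + 1) by ring.
rewrite H1 /p /r /C expnS; ring.
Qed.

Local Open Scope ring_scope.

Theorem theorem4p8 (p m k : nat) :
  prime p -> (0 < m)%N -> p = (2 ^ m).+1 -> (0 < k)%N ->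
  (totient_iter_sum (p ^ k))%:R =
    (2%:R / (p%:R + 1)) *
      ((p ^ k)%:R * (p%:R - 1) + 2%:R * ((p%:R - 1) / 2%:R) ^+ k) - 1
    :> rat.
Proof.
move=> pr; case: m => [|n] // _ Ep; subst p; case: k => [|k'] // _.
have := main_nat n k' pr.
set S := totient_iter_sum _.
move=> /(congr1 (fun z => z%:R : rat)).
rewrite !natrM !natrD !natrM (natrX _ (2 ^ n)) (natrX _ (2 ^ n.+1).+1) /=.
set x : rat := (2 ^ n)%:R.
have hp : ((2 ^ n.+1).+1)%:R = 2 * x + 1 :> rat by rewrite -addn1 natrD expnS natrM.
rewrite hp => H.
have Hx : x + 1 != 0.
  by rewrite /x natr1 pnatr_eq0.
have HS : S%:R = (2 * (x * (2 * x + 1) ^+ k'.+1 + x ^+ k'.+1)) / (x + 1) - 1.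
  by rewrite -H; field.
have H2 : (2 * x + 1 - 1) / 2 = x :> rat by field.
rewrite HS H2.
field.
rewrite -/x Hx andbT.
have -> : 2 * x + 1 + 1 = 2 * (x + 1) by ring.
by rewrite mulf_neq0.
Qed.
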